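(* Let $\Gamma$ be a (finite or infinite) bipartite graph with $|V(\Gamma)|\geq 4$. The following are equivalent: (1) $\Gamma$ is a discrete half graph; (2) $P_5\not\leq\Gamma$ and $\Gamma$ is critical.
   Context: A bipartite graph $\Gamma$ with bipartition $\{X,Y\}$ is a half graph if there exist a linear order $L$ on $X$ and a bijection $\varphi:X\to Y$ such that $E(\Gamma)=\{\{x,\varphi(x')\}: x\leq x' \bmod L\}$; such $L$ is unique. A linear order $L$ is discrete if every element that is not the smallest has a predecessor and every element that is not the largest has a successor. A half graph is discrete if the linear order $L$ above is discrete. $P_5$ is the path on 5 vertices; $G\leq H$ means $G$ is isomorphic to an induced subgraph of $H$. A module of a graph is a set $M$ of vertices such that each vertex outside $M$ is adjacent to all or none of $M$; $\emptyset$, $V(\Gamma)$ and singletons are trivial; $\Gamma$ is prime if $|V(\Gamma)|\geq 3$ and all its modules are trivial; a prime graph $\Gamma$ is critical if $\Gamma-v$ is not prime for every vertex $v$. *)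

(* Defs.v *)
From Stdlib Require Import Arith.
Set Implicit Arguments.

Definition simple_graph (V : Type) (adj : V -> V -> Prop) : Prop :=
  (forall x y, adj x y -> adj y x) /\ (forall x, ~ adj x x).

(* {X, Y} with Y = complement of X is a bipartition: every edge joins X and Y *)
Definition bipartition (V : Type) (adj : V -> V -> Prop) (X : V -> Prop) : Prop :=
  forall x y, adj x y -> (X x <-> ~ X y).

Definition at_least (n : nat) (V : Type) : Prop :=
  exists f : nat -> V, forall i j, i < n -> j < n -> f i = f j -> i = j.

Definition linear_order (T : Type) (le : T -> T -> Prop) : Prop :=
  (forall x, le x x) /\
  (forall x y, le x y -> le y x -> x = y) /\
  (forall x y z, le x y -> le y z -> le x z) /\
  (forall x y, le x y \/ le y x).

Definition strict (T : Type) (le : T -> T -> Prop) (x y : T) : Prop :=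
  le x y /\ x <> y.

Definition discrete_order (T : Type) (le : T -> T -> Prop) : Prop :=
  (forall x, (exists y, strict le y x) ->
     exists p, strict le p x /\ forall z, ~ (strict le p z /\ strict le z x)) /\
  (forall x, (exists y, strict le x y) ->
     exists s, strict le x s /\ forall z, ~ (strict le x z /\ strict le z s)).

Definition bijective_fun (A B : Type) (f : A -> B) : Prop :=
  (forall a1 a2, f a1 = f a2 -> a1 = a2) /\ (forall b, exists a, f a = b).

(* Gamma with bipartition {X, Y} (Y = complement of X) is a half graph with
   linear order L on X: there is a bijection phi : X -> Y with
   E = { {x, phi x'} : x <= x' mod L }.  Since every edge joins X and Y
   (bipartition), this amounts to: for x in X and x' in X,
   adj x (phi x') <-> x <= x', with phi bijective. *)
Definition half_graph_with (V : Type) (adj : V -> V -> Prop) (X : V -> Prop)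
    (L : {x : V | X x} -> {x : V | X x} -> Prop) : Prop :=
  linear_order L /\
  exists phi : {x : V | X x} -> {y : V | ~ X y},
    bijective_fun phi /\
    forall x x' : {x : V | X x}, adj (proj1_sig x) (proj1_sig (phi x')) <-> L x x'.

Definition discrete_half_graph (V : Type) (adj : V -> V -> Prop) (X : V -> Prop) : Prop :=
  exists L, half_graph_with adj X L /\ discrete_order L.

Definition has_induced_P5 (V : Type) (adj : V -> V -> Prop) : Prop :=
  exists f : nat -> V,
    (forall i j, i < 5 -> j < 5 -> f i = f j -> i = j) /\
    (forall i j, i < 5 -> j < 5 -> (adj (f i) (f j) <-> (S i = j \/ S j = i))).

Definition is_module (V : Type) (adj : V -> V -> Prop) (M : V -> Prop) : Prop :=
  forall v, ~ M v ->
    (forall m, M m -> adj v m) \/ (forall m, M m -> ~ adj v m).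

Definition trivial_module (V : Type) (M : V -> Prop) : Prop :=
  (forall v, ~ M v) \/ (forall v, M v) \/ (exists a, forall v, M v <-> v = a).

Definition prime_graph (V : Type) (adj : V -> V -> Prop) : Prop :=
  at_least 3 V /\ forall M : V -> Prop, is_module adj M -> trivial_module M.

Definition delete_vertex (V : Type) (adj : V -> V -> Prop) (v : V) :
    {u : V | u <> v} -> {u : V | u <> v} -> Prop :=
  fun a b => adj (proj1_sig a) (proj1_sig b).

Definition critical_graph (V : Type) (adj : V -> V -> Prop) : Prop :=
  prime_graph adj /\ forall v : V, ~ prime_graph (@delete_vertex V adj v).

(* Main.v *)
Require Import Defs.
From Stdlib Require Import Arith Lia Classical ProofIrrelevance ClassicalEpsilon.

Lemma sig_ext (A : Type) (P : A -> Prop) (a b : {x : A | P x}) :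
  proj1_sig a = proj1_sig b -> a = b.
Proof.
  destruct a as [a ha], b as [b hb]; simpl; intro E; subst b.
  f_equal; apply proof_irrelevance.
Qed.

Ltac pig hf :=
  first [ assert (0 = 1) by (apply hf; [lia|lia|congruence]); lia
        | assert (0 = 2) by (apply hf; [lia|lia|congruence]); lia
        | assert (0 = 3) by (apply hf; [lia|lia|congruence]); lia
        | assert (1 = 2) by (apply hf; [lia|lia|congruence]); lia
        | assert (1 = 3) by (apply hf; [lia|lia|congruence]); lia
        | assert (2 = 3) by (apply hf; [lia|lia|congruence]); lia ].

Lemma avoid3 (V : Type) : at_least 4 V -> forall a b c : V, exists d, d <> a /\ d <> b /\ d <> c.
Proof.
  intros [f hf] a b c.
  apply NNPP; intro H.
  assert (Hk : forall k, f k = a \/ f k = b \/ f k = c).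
  { intro k. apply NNPP; intro H'. apply H. exists (f k). tauto. }
  pose proof (Hk 0) as H0; pose proof (Hk 1) as H1; pose proof (Hk 2) as H2; pose proof (Hk 3) as H3.
  destruct H0 as [H0|[H0|H0]]; destruct H1 as [H1|[H1|H1]]; destruct H2 as [H2|[H2|H2]];
  destruct H3 as [H3|[H3|H3]]; pig hf.
Qed.

Lemma nontriv_false (V : Type) (adj : V -> V -> Prop) (M : V -> Prop) a b c :
  prime_graph adj -> is_module adj M -> M a -> M b -> a <> b -> ~ M c -> False.
Proof.
  intros [_ hp] hm ha hb hab hc.
  destruct (hp M hm) as [h|[h|[s h]]].
  - exact (h a ha).
  - exact (hc (h c)).
  - apply hab. rewrite (proj1 (h a) ha), (proj1 (h b) hb). reflexivity.
Qed.

Lemma P5_of (V : Type) (adj : V -> V -> Prop) (v0 v1 v2 v3 v4 : V) :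
  simple_graph adj ->
  adj v0 v1 -> adj v1 v2 -> adj v2 v3 -> adj v3 v4 ->
  ~ adj v0 v2 -> ~ adj v0 v3 -> ~ adj v0 v4 -> ~ adj v1 v3 -> ~ adj v1 v4 -> ~ adj v2 v4 ->
  has_induced_P5 adj.
Proof.
  intros [hsym hirr] e01 e12 e23 e34 n02 n03 n04 n13 n14 n24.
  pose proof (hsym _ _ e01) as e10. pose proof (hsym _ _ e12) as e21.
  pose proof (hsym _ _ e23) as e32. pose proof (hsym _ _ e34) as e43.
  assert (n20 : ~ adj v2 v0) by (intro h; apply n02; auto).
  assert (n30 : ~ adj v3 v0) by (intro h; apply n03; auto).
  assert (n40 : ~ adj v4 v0) by (intro h; apply n04; auto).
  assert (n31 : ~ adj v3 v1) by (intro h; apply n13; auto).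
  assert (n41 : ~ adj v4 v1) by (intro h; apply n14; auto).
  assert (n42 : ~ adj v4 v2) by (intro h; apply n24; auto).
  assert (d01 : v0 <> v1) by (intro E; subst; eapply hirr; eauto).
  assert (d12 : v1 <> v2) by (intro E; subst; eapply hirr; eauto).
  assert (d23 : v2 <> v3) by (intro E; subst; eapply hirr; eauto).
  assert (d34 : v3 <> v4) by (intro E; subst; eapply hirr; eauto).
  assert (d02 : v0 <> v2) by (intro E; subst; contradiction).
  assert (d03 : v0 <> v3) by (intro E; subst; contradiction).
  assert (d04 : v0 <> v4) by (intro E; subst; contradiction).
  assert (d13 : v1 <> v3) by (intro E; subst; contradiction).
  assert (d14 : v1 <> v4) by (intro E; subst; contradiction).
  assert (d24 : v2 <> v4) by (intro E; subst; contradiction).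
  exists (fun i => match i with 0 => v0 | 1 => v1 | 2 => v2 | 3 => v3 | _ => v4 end).
  split.
  - intros i j hi hj.
    destruct i as [|[|[|[|[|i]]]]]; try lia; destruct j as [|[|[|[|[|j]]]]]; try lia;
    intro E; first [reflexivity | exfalso; congruence].
  - intros i j hi hj.
    destruct i as [|[|[|[|[|i]]]]]; try lia; destruct j as [|[|[|[|[|j]]]]]; try lia;
    split; intro E;
    first [ left; reflexivity | right; reflexivity | exfalso; contradiction
          | exfalso; eapply hirr; exact E
          | destruct E as [E|E]; first [assumption | exfalso; lia] ].
Qed.

Lemma notprime_of (V : Type) (adj : V -> V -> Prop) (M : V -> Prop) a b c :
  is_module adj M -> M a -> M b -> a <> b -> ~ M c -> ~ prime_graph adj.
Proof. intros hm ha hb hab hc hp; exact (nontriv_false V adj M a b c hp hm ha hb hab hc). Qed.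

Lemma sameX (V : Type) (adj : V -> V -> Prop) (X : V -> Prop) a b :
  bipartition adj X -> X a -> X b -> ~ adj a b.
Proof. intros hb ha hb' h. apply (proj1 (hb a b h) ha hb'). Qed.

Lemma sameY (V : Type) (adj : V -> V -> Prop) (X : V -> Prop) a b :
  bipartition adj X -> ~ X a -> ~ X b -> ~ adj a b.
Proof. intros hb ha hb' h. apply ha. apply (proj2 (hb a b h) hb'). Qed.

Lemma sideY (V : Type) (adj : V -> V -> Prop) (X : V -> Prop) a b :
  bipartition adj X -> adj a b -> X a -> ~ X b.
Proof. intros hb h ha. exact (proj1 (hb a b h) ha). Qed.

Lemma sideX (V : Type) (adj : V -> V -> Prop) (X : V -> Prop) a b :
  bipartition adj X -> adj a b -> ~ X a -> X b.
Proof. intros hb h ha. apply NNPP; intro hb'. exact (ha (proj2 (hb a b h) hb')). Qed.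

Lemma dir1 (V : Type) (adj : V -> V -> Prop) (X : V -> Prop)
  (L : {x : V | X x} -> {x : V | X x} -> Prop) (phi : {x : V | X x} -> {y : V | ~ X y}) :
  simple_graph adj -> bipartition adj X -> at_least 4 V ->
  linear_order L -> bijective_fun phi ->
  (forall x x', adj (proj1_sig x) (proj1_sig (phi x')) <-> L x x') ->
  discrete_order L ->
  ~ has_induced_P5 adj /\ critical_graph adj.
Proof.
  intros hs hb h4 [Lr [La [Lt Lto]]] [pinj psur] hadj [dpred dsucc].
  destruct hs as [hsym hirr].
  set (xv := fun i : {x : V | X x} => proj1_sig i).
  set (yv := fun i : {x : V | X x} => proj1_sig (phi i)).
  assert (hxy : forall i j, adj (xv i) (yv j) <-> L i j) by (intros; apply hadj).
  assert (hyx : forall i j, adj (yv j) (xv i) <-> L i j).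
  { intros i j; rewrite <- hxy; split; apply hsym. }
  assert (hXx : forall i, X (xv i)) by (intro i; exact (proj2_sig i)).
  assert (hYy : forall i, ~ X (yv i)) by (intro i; exact (proj2_sig (phi i))).
  assert (nxx : forall i j, ~ adj (xv i) (xv j)) by (intros; apply (sameX V adj X); auto).
  assert (nyy : forall i j, ~ adj (yv i) (yv j)) by (intros; apply (sameY V adj X); auto).
  assert (cover : forall v, (exists i, v = xv i) \/ (exists i, v = yv i)).
  { intro v. destruct (classic (X v)) as [h|h].
    - left. exists (exist _ v h). reflexivity.
    - right. destruct (psur (exist _ v h)) as [i hi]. exists i. unfold yv. rewrite hi. reflexivity. }
  assert (xinj : forall i j, xv i = xv j -> i = j) by (intros; apply sig_ext; auto).
  assert (yinj : forall i j, yv i = yv j -> i = j) by (intros; apply pinj, sig_ext; auto).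
  assert (xy : forall i j, xv i <> yv j).
  { intros i j E. apply (hYy j). rewrite <- E. auto. }
  assert (Lrefl := Lr).
  split.
  -
    assert (chain : forall a b c d, adj a b -> adj c d -> X a -> X c -> adj a d \/ adj c b).
    { intros a b c d hab hcd ha hc.
      assert (hb' : ~ X b) by (eapply sideY; eauto).
      assert (hd' : ~ X d) by (eapply sideY; eauto).
      destruct (psur (exist _ b hb')) as [j1 hj1].
      destruct (psur (exist _ d hd')) as [j2 hj2].
      assert (E1 : b = yv j1) by (unfold yv; rewrite hj1; reflexivity).
      assert (E2 : d = yv j2) by (unfold yv; rewrite hj2; reflexivity).
      assert (Ea : a = xv (exist _ a ha)) by reflexivity.
      assert (Ec : c = xv (exist _ c hc)) by reflexivity.
      rewrite E1, Ea in hab. rewrite E2, Ec in hcd. rewrite E1, E2, Ea, Ec.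
      rewrite hxy in hab, hcd. rewrite !hxy.
      destruct (Lto (exist _ a ha) (exist _ c hc)) as [h|h].
      - left. eauto.
      - right. eauto. }
    assert (chain2 : forall a b c d, adj a b -> adj c d ->
              adj a c \/ adj a d \/ adj b c \/ adj b d).
    { intros a b c d hab hcd.
      destruct (classic (X a)) as [ha|ha]; destruct (classic (X c)) as [hc|hc].
      - destruct (chain a b c d hab hcd ha hc); auto.
      - assert (X d) by (eapply sideX; eauto).
        destruct (chain a b d c hab (hsym _ _ hcd) ha H); auto.
      - assert (X b) by (eapply sideX; eauto).
        destruct (chain b a c d (hsym _ _ hab) hcd H hc); auto.
      - assert (X b) by (eapply sideX; eauto). assert (X d) by (eapply sideX; eauto).
        destruct (chain b a d c (hsym _ _ hab) (hsym _ _ hcd) H H0); auto. }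
    intros [f [finj fadj]].
    assert (e01 : adj (f 0) (f 1)) by (apply fadj; lia).
    assert (e34 : adj (f 3) (f 4)) by (apply fadj; lia).
    assert (n03 : ~ adj (f 0) (f 3)) by (rewrite fadj; lia).
    assert (n04 : ~ adj (f 0) (f 4)) by (rewrite fadj; lia).
    assert (n13 : ~ adj (f 1) (f 3)) by (rewrite fadj; lia).
    assert (n14 : ~ adj (f 1) (f 4)) by (rewrite fadj; lia).
    destruct (chain2 _ _ _ _ e01 e34) as [h|[h|[h|h]]]; contradiction.
  - assert (Kall : forall M, is_module adj M -> forall i, M (xv i) -> M (yv i) -> forall v, M v).
    { intros M hm i hxi hyi.
      assert (both : forall j, M (xv j) /\ M (yv j)).
      { intro j.
        destruct (classic (M (xv j))) as [h1|h1]; destruct (classic (M (yv j))) as [h2|h2].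
        - auto.
        - exfalso. destruct (hm _ h2) as [h|h].
          + exact (nyy j i (h _ hyi)).
          + apply (h _ h1). apply hyx, Lr.
        - exfalso. destruct (hm _ h1) as [h|h].
          + exact (nxx j i (h _ hxi)).
          + apply (h _ h2). apply hxy, Lr.
        - exfalso. destruct (hm _ h1) as [h|h].
          + exact (nxx j i (h _ hxi)).
          + destruct (hm _ h2) as [h'|h'].
            * exact (nyy j i (h' _ hyi)).
            * destruct (Lto i j) as [l|l].
              -- apply (h' _ hxi). apply hyx, l.
              -- apply (h _ hyi). apply hxy, l. }
      intro v. destruct (cover v) as [[j ->]|[j ->]]; apply both. }
    assert (XX : forall M, is_module adj M -> forall i k, M (xv i) -> M (xv k) -> L i k -> i <> k -> M (yv i)).
    { intros M hm i k h1 h2 l d. apply NNPP; intro h. destruct (hm _ h) as [h'|h'].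
      - apply d. apply La; auto. apply hyx. exact (h' _ h2).
      - apply (h' _ h1). apply hyx, Lr. }
    assert (YY : forall M, is_module adj M -> forall i k, M (yv i) -> M (yv k) -> L i k -> i <> k -> M (xv k)).
    { intros M hm i k h1 h2 l d. apply NNPP; intro h. destruct (hm _ h) as [h'|h'].
      - apply d. apply La; auto. apply hxy. exact (h' _ h1).
      - apply (h' _ h2). apply hxy, Lr. }
    assert (XY1 : forall M, is_module adj M -> forall i k, M (xv i) -> M (yv k) -> L i k -> M (xv k)).
    { intros M hm i k h1 h2 l. apply NNPP; intro h. destruct (hm _ h) as [h'|h'].
      - exact (nxx k i (h' _ h1)).
      - apply (h' _ h2). apply hxy, Lr. }
    assert (XY2 : forall M, is_module adj M -> forall i k, M (xv i) -> M (yv k) -> L k i -> M (yv i)).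
    { intros M hm i k h1 h2 l. apply NNPP; intro h. destruct (hm _ h) as [h'|h'].
      - exact (nyy i k (h' _ h2)).
      - apply (h' _ h1). apply hyx, Lr. }
    assert (all2 : forall M, is_module adj M -> forall a b, M a -> M b -> a <> b -> forall v, M v).
    { intros M hm a b ha hb' d.
      destruct (cover a) as [[i ->]|[i ->]]; destruct (cover b) as [[k ->]|[k ->]].
      - assert (ne : i <> k) by (intro; subst; auto).
        destruct (Lto i k) as [l|l].
        + exact (Kall M hm i ha (XX M hm i k ha hb' l ne)).
        + exact (Kall M hm k hb' (XX M hm k i hb' ha l (not_eq_sym ne))).
      - destruct (Lto i k) as [l|l].
        + exact (Kall M hm k (XY1 M hm i k ha hb' l) hb').
        + exact (Kall M hm i ha (XY2 M hm i k ha hb' l)).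
      - destruct (Lto k i) as [l|l].
        + exact (Kall M hm i (XY1 M hm k i hb' ha l) ha).
        + exact (Kall M hm k hb' (XY2 M hm k i hb' ha l)).
      - assert (ne : i <> k) by (intro; subst; auto).
        destruct (Lto i k) as [l|l].
        + exact (Kall M hm k (YY M hm i k ha hb' l ne) hb').
        + exact (Kall M hm i (YY M hm k i hb' ha l (not_eq_sym ne)) ha). }
    split.
    + split.
      * destruct h4 as [f hf]. exists f. intros; apply hf; auto; lia.
      * intros M hm.
        destruct (classic (exists a b, M a /\ M b /\ a <> b)) as [[a [b [ha [hb' d]]]]|hn].
        -- right; left. exact (all2 M hm a b ha hb' d).
        -- destruct (classic (exists a, M a)) as [[a ha]|hn'].
           ++ right; right. exists a. intro v; split.
              ** intro hv. apply NNPP; intro d. apply hn. exists v, a; auto.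
              ** intros ->; exact ha.
           ++ left. intros v hv. apply hn'. eauto.
    + intro v. destruct (cover v) as [[i ->]|[i ->]].
      * destruct (classic (exists j, strict L j i)) as [hex|hno].
        -- destruct (dpred i hex) as [p [[lpi npi] hbetw]].
           destruct (avoid3 V h4 (xv i) (yv p) (yv i)) as [d [d1 [d2 d3]]].
           apply (notprime_of _ (@delete_vertex V adj (xv i))
                    (fun u => proj1_sig u = yv p \/ proj1_sig u = yv i)
                    (exist _ (yv p) (not_eq_sym (xy i p)))
                    (exist _ (yv i) (not_eq_sym (xy i i))) (exist _ d d1)).
           ++ intros [w hw] hnw; simpl in hnw; unfold delete_vertex; simpl.
              destruct (cover w) as [[j ->]|[j ->]].
              ** assert (nji : j <> i) by (intro; subst; auto).
                 destruct (classic (L j p)) as [l|l].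
                 --- left. intros [m hm'] [E|E]; simpl in E |- *; subst m; apply hxy;
                     [exact l | exact (Lt _ _ _ l lpi)].
                 --- right. intros [m hm'] [E|E]; simpl in E |- *; subst m; rewrite hxy.
                     +++ exact l.
                     +++ intro l'. destruct (Lto p j) as [l2|l2]; [|contradiction].
                         apply (hbetw j). split; split; auto.
                         intro; subst; apply l; apply Lr.
              ** right. intros [m hm'] [E|E]; simpl in E |- *; subst m; apply nyy.
           ++ simpl; left; reflexivity.
           ++ simpl; right; reflexivity.
           ++ intro E. apply (f_equal (@proj1_sig _ _)) in E. simpl in E. apply yinj in E. auto.
           ++ simpl; intros [E|E]; auto.
        -- destruct (avoid3 V h4 (xv i) (yv i) (xv i)) as [d [d1 [d2 _]]].
           destruct (avoid3 V h4 (xv i) (yv i) d) as [e [e1 [e2 e3]]].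
           apply (notprime_of _ (@delete_vertex V adj (xv i))
                    (fun u => proj1_sig u <> yv i)
                    (exist _ d d1) (exist _ e e1)
                    (exist _ (yv i) (not_eq_sym (xy i i)))).
           ++ intros [w hw] hnw; simpl in hnw; apply NNPP in hnw; subst w.
              right. intros [m hm'] hm; simpl in *. unfold delete_vertex; simpl.
              destruct (cover m) as [[j ->]|[j ->]].
              ** rewrite hyx. intro l. apply hno. exists j. split; auto. intro; subst; auto.
              ** apply nyy.
           ++ simpl; auto.
           ++ simpl; auto.
           ++ intro E. apply (f_equal (@proj1_sig _ _)) in E. simpl in E. auto.
           ++ simpl; auto.
      * destruct (classic (exists j, strict L i j)) as [hex|hno].
        -- destruct (dsucc i hex) as [s [[lis nis] hbetw]].
           destruct (avoid3 V h4 (yv i) (xv i) (xv s)) as [d [d1 [d2 d3]]].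
           apply (notprime_of _ (@delete_vertex V adj (yv i))
                    (fun u => proj1_sig u = xv i \/ proj1_sig u = xv s)
                    (exist _ (xv i) (xy i i))
                    (exist _ (xv s) (xy s i)) (exist _ d d1)).
           ++ intros [w hw] hnw; simpl in hnw; unfold delete_vertex; simpl.
              destruct (cover w) as [[j ->]|[j ->]].
              ** right. intros [m hm'] [E|E]; simpl in E |- *; subst m; apply nxx.
              ** assert (nji : j <> i) by (intro; subst; auto).
                 destruct (classic (L s j)) as [l|l].
                 --- left. intros [m hm'] [E|E]; simpl in E |- *; subst m; apply hyx;
                     [exact (Lt _ _ _ lis l) | exact l].
                 --- right. intros [m hm'] [E|E]; simpl in E |- *; subst m; rewrite hyx.
                     +++ intro l'. destruct (Lto j s) as [l2|l2]; [|contradiction].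
                         apply (hbetw j). split; split; auto.
                         intro; subst; apply l; apply Lr.
                     +++ exact l.
           ++ simpl; left; reflexivity.
           ++ simpl; right; reflexivity.
           ++ intro E. apply (f_equal (@proj1_sig _ _)) in E. simpl in E. apply xinj in E. auto.
           ++ simpl; intros [E|E]; auto.
        -- destruct (avoid3 V h4 (yv i) (xv i) (yv i)) as [d [d1 [d2 _]]].
           destruct (avoid3 V h4 (yv i) (xv i) d) as [e [e1 [e2 e3]]].
           apply (notprime_of _ (@delete_vertex V adj (yv i))
                    (fun u => proj1_sig u <> xv i)
                    (exist _ d d1) (exist _ e e1)
                    (exist _ (xv i) (xy i i))).
           ++ intros [w hw] hnw; simpl in hnw; apply NNPP in hnw; subst w.
              right. intros [m hm'] hm; simpl in *. unfold delete_vertex; simpl.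
              destruct (cover m) as [[j ->]|[j ->]].
              ** apply nxx.
              ** rewrite hxy. intro l. apply hno. exists j. split; auto. intro; subst; auto.
           ++ simpl; auto.
           ++ simpl; auto.
           ++ intro E. apply (f_equal (@proj1_sig _ _)) in E. simpl in E. auto.
           ++ simpl; auto.
Qed.

Lemma noiso (V : Type) (adj : V -> V -> Prop) :
  prime_graph adj -> at_least 4 V -> forall w, exists z, adj w z.
Proof.
  intros hp h4 w. apply NNPP; intro H.
  destruct (avoid3 V h4 w w w) as [d [d1 _]].
  destruct (avoid3 V h4 w d d) as [e [e1 [e2 _]]].
  apply (nontriv_false V adj (fun u => u <> w) d e w hp); auto.
  intros u hu. apply NNPP in hu. subst u. right. intros m _ h. apply H; eauto.
Qed.

Lemma notwin (V : Type) (adj : V -> V -> Prop) :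
  simple_graph adj -> prime_graph adj -> at_least 4 V ->
  forall a a', (forall z, adj a z <-> adj a' z) -> a = a'.
Proof.
  intros [hsym _] hp h4 a a' H. apply NNPP; intro ne.
  destruct (avoid3 V h4 a a' a) as [d [d1 [d2 _]]].
  apply (nontriv_false V adj (fun u => u = a \/ u = a') a a' d hp); auto.
  - intros u hu. destruct (classic (adj u a)) as [h|h].
    + left. intros m [->| ->]; auto. apply hsym, H, hsym, h.
    + right. intros m [->| ->]; auto. intro h'. apply h, hsym, H, hsym, h'.
  - intros [E|E]; auto.
Qed.

Lemma chainP (V : Type) (adj : V -> V -> Prop) (P : V -> Prop) :
  simple_graph adj -> bipartition adj P -> prime_graph adj -> at_least 4 V ->
  ~ has_induced_P5 adj ->
  forall a b c d, adj a b -> adj c d -> P a -> P c -> ~ adj a d -> ~ adj c b -> False.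
Proof.
  intros hs hb hp h4 hnp a b c d hab hcd ha hc nad ncb.
  pose proof hs as [hsym hirr].
  set (M := fun u => exists a', P a' /\ (u = a' \/ adj u a') /\ exists e, adj a' e /\ adj a e).
  assert (hm : is_module adj M).
  { intros u hu. right. intros m [a' [ha' [E [e [e1 e2]]]]] hum.
    destruct E as [E|E].
    - subst m. apply hu. exists a'. split; auto. split; auto. eauto.
    - assert (nPm : ~ P m) by (eapply sideY; [exact hb| apply hsym, E | exact ha']).
      assert (Pu : P u) by (eapply sideX; [exact hb | apply hsym, hum | exact nPm]).
      destruct (classic (adj m a)) as [hma|hma].
      { apply hu. exists u. split; auto. split; auto. exists m. split; auto. }
      destruct (classic (adj u e)) as [hue|hue].
      { apply hu. exists u. split; auto. split; auto. exists e. split; auto. }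
      apply hnp. apply (P5_of V adj u m a' e a hs hum E e1 (hsym _ _ e2)).
      + apply (sameX V adj P); auto.
      + exact hue.
      + apply (sameX V adj P); auto.
      + apply (sameY V adj P); auto. eapply sideY; eauto.
      + exact hma.
      + apply (sameX V adj P); auto. }
  destruct hp as [h3 hpr] eqn:Ehp.
  assert (Ma : M a) by (exists a; split; auto; split; auto; eauto).
  assert (Mb : M b) by (exists a; split; auto; split; [right; apply hsym, hab|eauto]).
  assert (nPb : ~ P b) by (eapply sideY; eauto).
  assert (nPd : ~ P d) by (eapply sideY; eauto).
  destruct (hpr M hm) as [h|[h|[s h]]].
  - exact (h a Ma).
  - destruct (h c) as [a' [ha' [E [e [e1 e2]]]]].
    destruct E as [E|E].
    + subst a'. apply hnp. apply (P5_of V adj b a e c d hs (hsym _ _ hab) e2 (hsym _ _ e1) hcd).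
      * apply (sameY V adj P); auto. eapply sideY; eauto.
      * intro h'. apply ncb, hsym, h'.
      * apply (sameY V adj P); auto.
      * apply (sameX V adj P); auto.
      * exact nad.
      * apply (sameY V adj P); auto. eapply sideY; eauto.
    + exact (sameX V adj P c a' hb hc ha' E).
  - assert (a = b) by (rewrite (proj1 (h a) Ma), (proj1 (h b) Mb); reflexivity).
    subst b. exact (hirr a hab).
Qed.

Definition chainprop (V : Type) (adj : V -> V -> Prop) (P : V -> Prop) : Prop :=
  forall a b c d, adj a b -> adj c d -> P a -> P c -> ~ adj a d -> ~ adj c b -> False.

Lemma chain2 (V : Type) (adj : V -> V -> Prop) (P : V -> Prop) :
  simple_graph adj -> bipartition adj P -> chainprop V adj P ->
  forall a b c d, adj a b -> adj c d -> adj a c \/ adj a d \/ adj b c \/ adj b d.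
Proof.
  intros [hsym _] hb CH a b c d hab hcd. apply NNPP; intro H.
  assert (n1 : ~ adj a c) by tauto. assert (n2 : ~ adj a d) by tauto.
  assert (n3 : ~ adj b c) by tauto. assert (n4 : ~ adj b d) by tauto.
  destruct (classic (P a)) as [ha|ha]; destruct (classic (P c)) as [hc|hc].
  - apply (CH a b c d hab hcd ha hc n2). intro h; apply n3, hsym, h.
  - assert (P d) by (eapply sideX; eauto).
    apply (CH a b d c hab (hsym _ _ hcd) ha H0 n1). intro h; apply n4, hsym, h.
  - assert (P b) by (eapply sideX; eauto).
    apply (CH b a c d (hsym _ _ hab) hcd H0 hc n4). intro h; apply n1, hsym, h.
  - assert (P b) by (eapply sideX; eauto). assert (P d) by (eapply sideX; eauto).
    apply (CH b a d c (hsym _ _ hab) (hsym _ _ hcd) H0 H1 n3). intro h; apply n2, hsym, h.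
Qed.

Lemma totalP (V : Type) (adj : V -> V -> Prop) (P : V -> Prop) :
  chainprop V adj P -> forall a c, P a -> P c ->
  (forall z, adj a z -> adj c z) \/ (forall z, adj c z -> adj a z).
Proof.
  intros CH a c ha hc. apply NNPP; intro H.
  apply not_or_and in H as [H1 H2].
  apply not_all_ex_not in H1 as [z1 H1]. apply not_all_ex_not in H2 as [z2 H2].
  apply imply_to_and in H1 as [h1 h1']. apply imply_to_and in H2 as [h2 h2'].
  exact (CH a z1 c z2 h1 h2 ha hc h2' h1').
Qed.

Lemma critP (V : Type) (adj : V -> V -> Prop) (P : V -> Prop) :
  simple_graph adj -> bipartition adj P -> prime_graph adj -> at_least 4 V ->
  chainprop V adj P ->
  forall v M, P v -> ~ M v ->
  (forall u, u <> v -> ~ M u -> (forall m, M m -> adj u m) \/ (forall m, M m -> ~ adj u m)) ->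
  (exists m1 m2, M m1 /\ M m2 /\ m1 <> m2) ->
  (exists o, o <> v /\ ~ M o) ->
  (exists w1 w2, ~ P w1 /\ ~ P w2 /\ ~ adj v w1 /\
      forall u, P u -> (adj u w2 <-> adj u w1 \/ u = v)) \/
  (exists w, ~ P w /\ forall u, adj u w <-> u = v).
Proof.
  intros hs hb hp h4 CH v M hv hMv hmod [m1 [m2 [hm1 [hm2 d12]]]] [o [ho hMo]].
  pose proof hs as [hsym hirr].
  assert (split1 : ~ (forall m, M m -> adj v m)).
  { intro H. apply (nontriv_false V adj M m1 m2 v hp); auto.
    intros u hu. destruct (classic (u = v)) as [->|ne]; auto. }
  assert (split2 : ~ (forall m, M m -> ~ adj v m)).
  { intro H. apply (nontriv_false V adj M m1 m2 v hp); auto.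
    intros u hu. destruct (classic (u = v)) as [->|ne]; auto. }
  apply not_all_ex_not in split1 as [mn split1]. apply imply_to_and in split1 as [Mmn amn].
  apply not_all_ex_not in split2 as [mp split2]. apply imply_to_and in split2 as [Mmp nmp].
  apply NNPP in nmp.
  assert (nPmp : ~ P mp) by (eapply sideY; eauto).
  destruct (classic (exists a, M a /\ P a)) as [[a [Ma Pa]]|hno].
  - assert (cut : forall u, u <> v -> ~ M u -> forall m, M m -> ~ adj u m).
    { intros u hu hMu. destruct (hmod u hu hMu) as [h|h]; auto.
      exfalso. destruct (classic (P u)) as [Pu|Pu].
      - exact (sameX V adj P u a hb Pu Pa (h a Ma)).
      - exact (sameY V adj P u mp hb Pu nPmp (h mp Mmp)). }
    right.
    assert (iso : exists w, w <> v /\ forall z, z <> v -> ~ adj w z).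
    { destruct (classic (exists o', o' <> v /\ adj o o')) as [[o' [ho' hoo']]|hn].
      - exists m1. split; [intro; subst; auto|].
        intros z hz hz'.
        assert (Mz : M z).
        { apply NNPP; intro hMz. exact (cut z hz hMz m1 hm1 (hsym _ _ hz')). }
        assert (nMo' : ~ M o') by (intro h; exact (cut o ho hMo o' h hoo')).
        destruct (chain2 V adj P hs hb CH m1 z o o' hz' hoo') as [h|[h|[h|h]]].
        + exact (cut o ho hMo m1 hm1 (hsym _ _ h)).
        + exact (cut o' ho' nMo' m1 hm1 (hsym _ _ h)).
        + exact (cut o ho hMo z Mz (hsym _ _ h)).
        + exact (cut o' ho' nMo' z Mz (hsym _ _ h)).
      - exists o. split; auto. intros z hz h. apply hn. eauto. }
    destruct iso as [w [hw hiso]].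
    destruct (noiso V adj hp h4 w) as [z hz].
    assert (z = v) by (apply NNPP; intro ne; exact (hiso z ne hz)). subst z.
    exists w. split.
    + eapply sideY; eauto.
    + intro u. split.
      * intro h. apply NNPP; intro ne. exact (hiso u ne (hsym _ _ h)).
      * intros ->. apply hsym, hz.
  - left. exists mn, mp.
    assert (nPmn : ~ P mn) by (intro h; apply hno; eauto).
    split; auto. split; auto. split; auto.
    intros u Pu. destruct (classic (u = v)) as [->|ne].
    + split; auto.
    + assert (hMu : ~ M u) by (intro h; apply hno; eauto).
      destruct (hmod u ne hMu) as [h|h].
      * split; intro; [left; auto | auto].
      * split; intro H.
        -- exfalso. exact (h mp Mmp H).
        -- destruct H as [H|H]; [exfalso; exact (h mn Mmn H)| contradiction].
Qed.

Lemma del_module (V : Type) (adj : V -> V -> Prop) :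
  at_least 4 V -> forall v, ~ prime_graph (@delete_vertex V adj v) ->
  exists M : V -> Prop, ~ M v /\
    (forall u, u <> v -> ~ M u -> (forall m, M m -> adj u m) \/ (forall m, M m -> ~ adj u m)) /\
    (exists m1 m2, M m1 /\ M m2 /\ m1 <> m2) /\ (exists o, o <> v /\ ~ M o).
Proof.
  intros h4 v hnp.
  destruct (avoid3 V h4 v v v) as [d0 [h0 _]].
  destruct (avoid3 V h4 v d0 d0) as [d1 [h1 [h10 _]]].
  destruct (avoid3 V h4 v d0 d1) as [d2 [h2 [h20 h21]]].
  assert (at3 : at_least 3 {u : V | u <> v}).
  { exists (fun k => match k with 0 => exist _ d0 h0 | 1 => exist _ d1 h1 | _ => exist _ d2 h2 end).
    intros i j hi hj.
    destruct i as [|[|[|i]]]; try lia; destruct j as [|[|[|j]]]; try lia;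
    intro E; apply (f_equal (@proj1_sig _ _)) in E; simpl in E; first [reflexivity | exfalso; congruence]. }
  assert (HM : exists M, is_module (@delete_vertex V adj v) M /\ ~ trivial_module M).
  { apply NNPP; intro H. apply hnp. split; [exact at3|].
    intros M hm. apply NNPP; intro ht. apply H. eauto. }
  destruct HM as [M [hm ht]].
  unfold trivial_module in ht.
  apply not_or_and in ht as [t1 ht]. apply not_or_and in ht as [t2 t3].
  apply not_all_ex_not in t1 as [a Ma]. apply NNPP in Ma.
  apply not_all_ex_not in t2 as [c Mc].
  assert (hb : exists b, M b /\ b <> a).
  { apply NNPP; intro H. apply t3. exists a. intro u. split.
    - intro hu. apply NNPP; intro ne. apply H. eauto.
    - intros ->; exact Ma. }
  destruct hb as [b [Mb nba]].
  exists (fun u => exists h : u <> v, M (exist _ u h)).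
  split; [|split; [|split]].
  - intros [h _]. apply h; reflexivity.
  - intros u hu hMu.
    assert (nM : ~ M (exist _ u hu)) by (intro; apply hMu; eauto).
    destruct (hm _ nM) as [H|H].
    + left. intros m [hm' Mm]. exact (H _ Mm).
    + right. intros m [hm' Mm]. exact (H _ Mm).
  - exists (proj1_sig a), (proj1_sig b).
    split; [|split].
    + exists (proj2_sig a). destruct a; exact Ma.
    + exists (proj2_sig b). destruct b; exact Mb.
    + intro E. apply nba. apply sig_ext. auto.
  - exists (proj1_sig c). split; [exact (proj2_sig c)|].
    intros [h Mc']. apply Mc. destruct c as [c hc]. simpl in *.
    rewrite (proof_irrelevance _ hc h). exact Mc'.
Qed.

Lemma critTI (V : Type) (adj : V -> V -> Prop) (P : V -> Prop) :
  simple_graph adj -> bipartition adj P -> critical_graph adj -> at_least 4 V ->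
  chainprop V adj P ->
  forall v, P v ->
  (exists w1 w2, ~ P w1 /\ ~ P w2 /\ ~ adj v w1 /\
      forall u, P u -> (adj u w2 <-> adj u w1 \/ u = v)) \/
  (exists w, ~ P w /\ forall u, adj u w <-> u = v).
Proof.
  intros hs hb [hp hc] h4 CH v hv.
  destruct (del_module V adj h4 v (hc v)) as [M [hMv [hmod [hm12 ho]]]].
  exact (critP V adj P hs hb hp h4 CH v M hv hMv hmod hm12 ho).
Qed.

Lemma Tdl (V : Type) (adj : V -> V -> Prop) (P : V -> Prop) :
  chainprop V adj P -> forall v w1 w2, P v -> ~ adj v w1 ->
  (forall u, P u -> (adj u w2 <-> adj u w1 \/ u = v)) ->
  forall u, P u -> (adj u w2 <-> forall z, adj v z -> adj u z).
Proof.
  intros CH v w1 w2 hv n1 H u hu. split.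
  - intro h. apply H in h; auto. destruct h as [h| ->]; auto.
    destruct (totalP V adj P CH u v hu hv) as [t|t]; auto.
    exfalso. apply n1. apply t. exact h.
  - intro t. apply t. apply (H v hv). right; reflexivity.
Qed.

Lemma Idl (V : Type) (adj : V -> V -> Prop) (v w : V) :
  (forall u, adj u w <-> u = v) ->
  forall u, (adj u w <-> forall z, adj v z -> adj u z).
Proof.
  intros H u. split.
  - intro h. apply H in h. subst. auto.
  - intro t. apply t. apply H. reflexivity.
Qed.

Lemma dir2 (V : Type) (adj : V -> V -> Prop) (X : V -> Prop) :
  simple_graph adj -> bipartition adj X -> at_least 4 V ->
  ~ has_induced_P5 adj -> critical_graph adj -> discrete_half_graph adj X.
Proof.
  intros hs hb h4 hnp hcr.
  pose proof hs as [hsym hirr].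
  pose proof hcr as [hp _].
  assert (hbY : bipartition adj (fun v => ~ X v)).
  { intros x y h. split; intro H.
    - intro nXy. apply H. exact (proj2 (hb x y h) nXy).
    - intro Xx. apply H. exact (proj1 (hb x y h) Xx). }
  pose proof (chainP V adj X hs hb hp h4 hnp) as CHX.
  pose proof (chainP V adj (fun v => ~ X v) hs hbY hp h4 hnp) as CHY.
  set (L := fun i j : {x : V | X x} => forall z, adj (proj1_sig j) z -> adj (proj1_sig i) z).
  assert (Lanti : forall i j, L i j -> L j i -> i = j).
  { intros i j h1 h2. apply sig_ext. apply (notwin V adj hs hp h4).
    intro z; split; [apply h2 | apply h1]. }
  assert (Lrefl : forall i, L i i) by (intros i z h; exact h).
  assert (Dx : forall i : {x : V | X x}, exists w : {y : V | ~ X y},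
             forall u, X u -> (adj u (proj1_sig w) <-> forall z, adj (proj1_sig i) z -> adj u z)).
  { intro i.
    destruct (critTI V adj X hs hb hcr h4 CHX (proj1_sig i) (proj2_sig i))
      as [[w1 [w2 [n1 [n2 [n12 H]]]]]|[w [nw H]]].
    - exists (exist _ w2 n2). simpl. exact (Tdl V adj X CHX _ w1 w2 (proj2_sig i) n12 H).
    - exists (exist _ w nw). intros u _. exact (Idl V adj _ w H u). }
  set (phi := fun i => proj1_sig (constructive_indefinite_description _ (Dx i))).
  assert (Hphi : forall i u, X u ->
             (adj u (proj1_sig (phi i)) <-> forall z, adj (proj1_sig i) z -> adj u z)).
  { intro i. exact (proj2_sig (constructive_indefinite_description _ (Dx i))). }
  assert (hadj : forall x x', adj (proj1_sig x) (proj1_sig (phi x')) <-> L x x').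
  { intros x x'. exact (Hphi x' (proj1_sig x) (proj2_sig x)). }
  assert (hyx : forall i j, adj (proj1_sig (phi j)) (proj1_sig i) <-> L i j).
  { intros i j. rewrite <- hadj. split; apply hsym. }
  assert (psur : forall y : {y : V | ~ X y}, exists x, phi x = y).
  { intro y.
    assert (Dy : exists w, ~ ~ X w /\
              forall u, ~ X u -> (adj u w <-> forall z, adj (proj1_sig y) z -> adj u z)).
    { destruct (critTI V adj (fun v => ~ X v) hs hbY hcr h4 CHY (proj1_sig y) (proj2_sig y))
        as [[w1 [w2 [n1 [n2 [n12 H]]]]]|[w [nw H]]].
      - exists w2. split; auto. exact (Tdl V adj _ CHY _ w1 w2 (proj2_sig y) n12 H).
      - exists w. split; auto. intros u _. exact (Idl V adj _ w H u). }
    destruct Dy as [w [nw D]].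
    pose proof (NNPP _ nw) as Xw.
    exists (exist _ w Xw). apply sig_ext. apply (notwin V adj hs hp h4). intro z.
    destruct (classic (X z)) as [Xz|nXz].
    - rewrite (hyx (exist _ z Xz) (exist _ w Xw)). unfold L; simpl. split.
      + intro h. apply hsym. apply h. apply hsym. apply (D (proj1_sig y) (proj2_sig y)).
        auto.
      + intros h t ht. assert (nXt : ~ X t) by (eapply sideY; eauto).
        apply hsym. apply (proj1 (D t nXt) (hsym _ _ ht)). exact h.
    - split; intro h; exfalso.
      + exact (sameY V adj X _ _ hb (proj2_sig (phi (exist _ w Xw))) nXz h).
      + exact (sameY V adj X _ _ hb (proj2_sig y) nXz h). }
  exists L. split.
  - split.
    + split; [exact Lrefl|]. split; [exact Lanti|]. split.
      * intros x y z h1 h2 t ht. apply h1, h2, ht.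
      * intros x y. destruct (totalP V adj X CHX (proj1_sig x) (proj1_sig y) (proj2_sig x) (proj2_sig y))
          as [t|t]; [right|left]; exact t.
    + exists phi. split; [split|].
      * intros a b E. apply Lanti.
        -- apply hadj. rewrite <- E. apply hadj, Lrefl.
        -- apply hadj. rewrite E. apply hadj, Lrefl.
      * exact psur.
      * exact hadj.
  - split.
    + intros i [j [lji nji]].
      destruct (critTI V adj X hs hb hcr h4 CHX (proj1_sig i) (proj2_sig i))
        as [[w1 [w2 [n1 [n2 [n12 H]]]]]|[w [nw H]]].
      * pose proof (Tdl V adj X CHX _ w1 w2 (proj2_sig i) n12 H) as D2.
        destruct (psur (exist _ w1 n1)) as [p hp1].
        assert (Hp : forall x, adj (proj1_sig x) w1 <-> L x p).
        { intro x. rewrite <- hadj. rewrite hp1. simpl. reflexivity. }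
        exists p. split; [split|].
        -- exact (proj1 (D2 _ (proj2_sig p)) (proj2 (H _ (proj2_sig p)) (or_introl (proj2 (Hp p) (Lrefl p))))).
        -- intro E. subst p. apply n12. apply Hp, Lrefl.
        -- intros z [[lpz npz] [lzi nzi]].
           pose proof (proj2 (D2 _ (proj2_sig z)) lzi) as h.
           apply (H _ (proj2_sig z)) in h. destruct h as [h|h].
           ++ apply npz. apply Lanti; auto. apply Hp, h.
           ++ apply nzi. apply sig_ext. exact h.
      * exfalso. apply nji. apply sig_ext. apply H. apply lji. apply H. reflexivity.
    + intros i [j [lij nij]].
      destruct (critTI V adj (fun v => ~ X v) hs hbY hcr h4 CHY (proj1_sig (phi i)) (proj2_sig (phi i)))
        as [[w1 [w2 [n1 [n2 [n12 H]]]]]|[w [nw H]]].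
      * pose proof (NNPP _ n1) as X1.
        pose proof (Tdl V adj _ CHY _ w1 w2 (proj2_sig (phi i)) n12 H) as D2.
        assert (Lis : L i (exist _ w1 X1)).
        { destruct (totalP V adj X CHX w1 (proj1_sig i) X1 (proj2_sig i)) as [t|t].
          - exact t.
          - exfalso. apply n12. apply hsym. apply t. apply hadj, Lrefl. }
        exists (exist _ w1 X1). split; [split|].
        -- exact Lis.
        -- intro E. apply (f_equal (@proj1_sig _ _)) in E. simpl in E.
           apply n12. rewrite <- E. apply hsym. apply hadj, Lrefl.
        -- intros z [[liz niz] [lzs nzs]]. apply nzs. apply Lanti; auto.
           intros t ht. simpl.
           pose proof (liz t ht) as ti.
           assert (nXt : ~ X t) by exact (sideY V adj X _ _ hb ti (proj2_sig i)).
           assert (tw2 : adj t w2).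
           { apply (proj2 (D2 t nXt)). intros r hr.
             assert (Xr : X r) by (eapply sideX; [exact hb | exact hr | exact (proj2_sig (phi i))]).
             pose proof (proj1 (hyx (exist _ r Xr) i) hr) as l. simpl in l.
             apply hsym. apply l. exact ti. }
           apply (H t nXt) in tw2. destruct tw2 as [h|h].
           ++ apply hsym, h.
           ++ exfalso. subst t. apply niz. apply Lanti; auto. apply hadj. exact ht.
      * exfalso. pose proof (NNPP _ nw) as Xw.
        assert (E : exist _ w Xw = i).
        { apply Lanti.
          - apply hadj. simpl. apply hsym. apply H. reflexivity.
          - intros t ht. simpl in ht. apply hsym in ht. apply H in ht. rewrite ht.
            apply hadj, Lrefl. }
        destruct (noiso V adj hp h4 (proj1_sig j)) as [t ht].
        pose proof (lij t ht) as ti.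
        rewrite <- E in ti. simpl in ti. apply hsym in ti. apply H in ti. subst t.
        apply nij. apply Lanti; auto. apply hadj. exact ht.
Qed.

Theorem theorem1p21 (V : Type) (adj : V -> V -> Prop) (X : V -> Prop) :
  simple_graph adj ->
  bipartition adj X ->
  at_least 4 V ->
  (discrete_half_graph adj X <-> (~ has_induced_P5 adj /\ critical_graph adj)).
Proof.
  intros hs hb h4. split.
  - intros [L [[hlin [phi [hbij hadj]]] hd]].
    exact (dir1 V adj X L phi hs hb h4 hlin hbij hadj hd).
  - intros [hnp hcr]. exact (dir2 V adj X hs hb h4 hnp hcr).
Qed.
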